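(* There exist $(a_1,a_2,a_3,a_4)$ and $(b_1,b_2,b_3,b_4)$ with all $a_j,b_j\in(0,1)$, $\sum_j a_j=\sum_jb_j=1$, and $(b_j)$ not a permutation of $(a_j)$, such that $$\theta(a;0)=\theta(b;0),\quad \theta(a;1)=\theta(b;1),\quad \theta'(a;0)=\theta'(b;0),\quad \theta'(a;1)=\theta'(b;1),$$ where $\theta(x_1,x_2,x_3,x_4;q)=\log(x_1^q+x_2^q+x_3^q+x_4^q)$ and $\theta'$ denotes the derivative with respect to $q$.
   Context: $\theta'(x_1,\dots,x_4;q)=\dfrac{\sum_{i=1}^4x_i^q\log x_i}{\sum_{i=1}^4x_i^q}$. *)

(* Defs.v *)
From Stdlib Require Import Reals List Permutation.
Open Scope R_scope.

Definition theta (x1 x2 x3 x4 q : R) : R :=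
  ln (Rpower x1 q + Rpower x2 q + Rpower x3 q + Rpower x4 q).

(* theta'(x;q) = d/dq theta(x;q) = (sum_i x_i^q log x_i) / (sum_i x_i^q),
   as given explicitly in the paper's context. *)
Definition theta' (x1 x2 x3 x4 q : R) : R :=
  (Rpower x1 q * ln x1 + Rpower x2 q * ln x2 + Rpower x3 q * ln x3
     + Rpower x4 q * ln x4)
  / (Rpower x1 q + Rpower x2 q + Rpower x3 q + Rpower x4 q).

(* Main.v *)
Require Import Defs.
From Stdlib Require Import Reals List Permutation Lra.
Open Scope R_scope.

Lemma lnm (x y : R) : 0 < x -> 0 < y -> ln (x * y) = ln x + ln y.
Proof. intros; apply ln_mult; auto. Qed.

Theorem theorem10 :
  exists a1 a2 a3 a4 b1 b2 b3 b4 : R,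
    (0 < a1 < 1) /\ (0 < a2 < 1) /\ (0 < a3 < 1) /\ (0 < a4 < 1) /\
    (0 < b1 < 1) /\ (0 < b2 < 1) /\ (0 < b3 < 1) /\ (0 < b4 < 1) /\
    a1 + a2 + a3 + a4 = 1 /\ b1 + b2 + b3 + b4 = 1 /\
    ~ Permutation (a1 :: a2 :: a3 :: a4 :: nil) (b1 :: b2 :: b3 :: b4 :: nil) /\
    theta a1 a2 a3 a4 0 = theta b1 b2 b3 b4 0 /\
    theta a1 a2 a3 a4 1 = theta b1 b2 b3 b4 1 /\
    theta' a1 a2 a3 a4 0 = theta' b1 b2 b3 b4 0 /\
    theta' a1 a2 a3 a4 1 = theta' b1 b2 b3 b4 1.
Proof.
  exists (5/130), (27/130), (28/130), (70/130), (6/130), (15/130), (49/130), (60/130).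
  assert (L6 : ln 6 = ln 2 + ln 3) by (rewrite <- lnm by lra; f_equal; lra).
  assert (L9 : ln 9 = ln 3 + ln 3) by (rewrite <- lnm by lra; f_equal; lra).
  assert (L27 : ln 27 = ln 9 + ln 3) by (rewrite <- lnm by lra; f_equal; lra).
  assert (L15 : ln 15 = ln 3 + ln 5) by (rewrite <- lnm by lra; f_equal; lra).
  assert (L4 : ln 4 = ln 2 + ln 2) by (rewrite <- lnm by lra; f_equal; lra).
  assert (L28 : ln 28 = ln 4 + ln 7) by (rewrite <- lnm by lra; f_equal; lra).
  assert (L10 : ln 10 = ln 2 + ln 5) by (rewrite <- lnm by lra; f_equal; lra).
  assert (L70 : ln 70 = ln 10 + ln 7) by (rewrite <- lnm by lra; f_equal; lra).
  assert (L49 : ln 49 = ln 7 + ln 7) by (rewrite <- lnm by lra; f_equal; lra).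
  assert (L60 : ln 60 = ln 6 + ln 10) by (rewrite <- lnm by lra; f_equal; lra).
  assert (D : forall u, 0 < u -> ln (u / 130) = ln u - ln 130)
    by (intros; unfold Rdiv; rewrite lnm, ln_Rinv; lra).
  unfold theta, theta'.
  rewrite !Rpower_O by lra. rewrite !Rpower_1 by lra.
  rewrite !D by lra.
  rewrite L27, L28, L70, L49, L60, L9, L4, L10, L6, L15.
  repeat split; try lra.
  - intro HP. assert (HI : In (5/130) (6/130 :: 15/130 :: 49/130 :: 60/130 :: nil)).
    { eapply Permutation_in; [exact HP| left; reflexivity]. }
    simpl in HI. lra.
  - f_equal; lra.
Qed.
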